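(* Let $n_1,n_2,n_3$ be integers with $3\le n_1,n_2\le n_3$, let $W$ be a basic landmark system for $K(\mathbf{n})$, and let $u=(n_1+1,n_2+1,n_3+1)$. Then $W\cup\{u\}$ is a resolving set of $K(\mathbf{n}+\mathbf{1})=K_{n_1+1}\times K_{n_2+1}\times K_{n_3+1}$ if and only if the landmark graph $\mathcal{G}(W)$ contains no bad $4$-cycle, no plain hex, and no rainbow $2$-$2$-triangle.
   Context: $K(\mathbf{n})=K_{n_1}\times K_{n_2}\times K_{n_3}$ is the direct product of complete graphs: vertices are triples $(x_1,x_2,x_3)$, $1\le x_i\le n_i$, adjacent iff they differ in every coordinate. A set $W$ of vertices is resolving if for every two distinct vertices $x,y\notin W$ some $w\in W$ has $d(x,w)\neq d(y,w)$ ($d$ = graph distance). Landmark graph: $W_{i,a}=\{w\in W: w_i=a\}$; $\mathcal{G}(W)$ is the hypergraph on $W$ whose hyperedges are the nonempty $W_{i,a}$, each colored $i$. A stick is a hyperedge with exactly two vertices, poofy if at least three. Basic landmark system for $K(\mathbf{n})$: a vertex set $W$ such that (1) $W_{i,a}\neq\emptyset$ for all $i\in\{1,2,3\}$, $1\le a\le n_i$; (2) $|W_{i,a}|\ge 2$ for all such $i,a$; (3) $|W_{i,a}\cap W_{j,b}|\le 1$ whenever $i\ne j$. Bad $4$-cycle: distinct $w_1,\dots,w_4\in W$ and $\{i,j,k\}=\{1,2,3\}$ such that $\{w_1,w_2\}$, $\{w_3,w_4\}$ are hyperedges of color $i$, $w_2,w_3$ lie in a common hyperedge of color $j$, and $w_4,w_1$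 lie in a common hyperedge of color $k$. Plain hex: distinct $w_1,\dots,w_6\in W$ and an ordering $(i,j,k)$ of $\{1,2,3\}$ with $\{w_1,w_2\},\{w_4,w_5\}$ hyperedges of color $i$, $\{w_2,w_3\},\{w_5,w_6\}$ of color $j$, $\{w_3,w_4\},\{w_6,w_1\}$ of color $k$. Rainbow $2$-$2$-triangle: distinct $w_1,w_2,w_3\in W$ and $\{i,j,k\}=\{1,2,3\}$ with $\{w_1,w_2\}$ a hyperedge of color $i$, $\{w_2,w_3\}$ a hyperedge of color $j$, and $w_1,w_3$ in a common hyperedge of color $k$. *)

(* Defs.v *)
From mathcomp Require Import all_boot.
Set Implicit Arguments. Unset Strict Implicit. Unset Printing Implicit Defensive.

(* Vertices of K(n1,n2,n3): triples of ordinals; the value a : 'I_n encodes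
   the paper's coordinate a+1 (0-based indexing). *)
Definition vtx (n1 n2 n3 : nat) : finType := ('I_n1 * 'I_n2 * 'I_n3)%type.

(* i-th coordinate (i = 0,1,2 stands for the paper's 1,2,3), as a nat *)
Definition crd n1 n2 n3 (x : vtx n1 n2 n3) (i : 'I_3) : nat :=
  match nat_of_ord i with
  | 0 => nat_of_ord x.1.1
  | 1 => nat_of_ord x.1.2
  | _ => nat_of_ord x.2
  end.

Definition nsz (n1 n2 n3 : nat) (i : 'I_3) : nat :=
  match nat_of_ord i with 0 => n1 | 1 => n2 | _ => n3 end.

Definition Kadj n1 n2 n3 : rel (vtx n1 n2 n3) :=
  fun x y => [forall i : 'I_3, crd x i != crd y i].

Fixpoint walk (T : finType) (e : rel T) (k : nat) (x y : T) : bool :=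
  match k with
  | 0 => x == y
  | k'.+1 => [exists z, e x z && walk e k' z y]
  end.

(* graph distance: Some (length of a shortest walk), None if unreachable.
   A shortest walk has length < #|T|, so searching in [0, #|T|) suffices. *)
Definition gdist (T : finType) (e : rel T) (x y : T) : option nat :=
  let s := iota 0 #|T| in
  if has (fun k => walk e k x y) s then Some (find (fun k => walk e k x y) s)
  else None.

Definition resolving (T : finType) (e : rel T) (W : {set T}) : Prop :=
  forall x y : T, x \notin W -> y \notin W -> x <> y ->
    exists2 w, w \in W & gdist e x w <> gdist e y w.

Definition Wia n1 n2 n3 (W : {set vtx n1 n2 n3}) (i : 'I_3) (a : nat)
  : {set vtx n1 n2 n3} := [set w in W | crd w i == a].

Definition basic_landmark n1 n2 n3 (W : {set vtx n1 n2 n3}) : Prop :=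
  (forall (i : 'I_3) (a : nat), a < nsz n1 n2 n3 i -> Wia W i a != set0) /\
  (forall (i : 'I_3) (a : nat), a < nsz n1 n2 n3 i -> 2 <= #|Wia W i a|) /\
  (forall (i j : 'I_3) (a b : nat), i != j -> #|Wia W i a :&: Wia W j b| <= 1).

(* S is a hyperedge of color i of the landmark graph G(W) *)
Definition hedge n1 n2 n3 (W : {set vtx n1 n2 n3}) (i : 'I_3)
  (S : {set vtx n1 n2 n3}) : Prop :=
  exists a : nat, Wia W i a = S /\ S != set0.

Definition stick n1 n2 n3 (W : {set vtx n1 n2 n3}) (i : 'I_3) (x y : vtx n1 n2 n3)
  : Prop := hedge W i [set x; y].

Definition cohedge n1 n2 n3 (W : {set vtx n1 n2 n3}) (i : 'I_3) (x y : vtx n1 n2 n3)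
  : Prop := exists S, hedge W i S /\ x \in S /\ y \in S.

Definition bad4cycle n1 n2 n3 (W : {set vtx n1 n2 n3}) : Prop :=
  exists (w1 w2 w3 w4 : vtx n1 n2 n3) (i j k : 'I_3),
    [/\ uniq [:: w1; w2; w3; w4], all (mem W) [:: w1; w2; w3; w4],
        uniq [:: i; j; k] &
        [/\ stick W i w1 w2, stick W i w3 w4, cohedge W j w2 w3 & cohedge W k w4 w1]].

Definition plainhex n1 n2 n3 (W : {set vtx n1 n2 n3}) : Prop :=
  exists (w1 w2 w3 w4 w5 w6 : vtx n1 n2 n3) (i j k : 'I_3),
    [/\ uniq [:: w1; w2; w3; w4; w5; w6], all (mem W) [:: w1; w2; w3; w4; w5; w6],
        uniq [:: i; j; k] &
        [/\ stick W i w1 w2, stick W i w4 w5, stick W j w2 w3, stick W j w5 w6 &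
            (stick W k w3 w4 /\ stick W k w6 w1)]].

Definition rainbow_tri n1 n2 n3 (W : {set vtx n1 n2 n3}) : Prop :=
  exists (w1 w2 w3 : vtx n1 n2 n3) (i j k : 'I_3),
    [/\ uniq [:: w1; w2; w3], all (mem W) [:: w1; w2; w3],
        uniq [:: i; j; k] &
        [/\ stick W i w1 w2, stick W j w2 w3 & cohedge W k w1 w3]].

Definition emb n1 n2 n3 (x : vtx n1 n2 n3) : vtx n1.+1 n2.+1 n3.+1 :=
  (widen_ord (leqnSn n1) x.1.1, widen_ord (leqnSn n2) x.1.2,
   widen_ord (leqnSn n3) x.2).

(* u = (n1+1, n2+1, n3+1) in 1-based coordinates *)
Definition ucorner n1 n2 n3 : vtx n1.+1 n2.+1 n3.+1 := (ord_max, ord_max, ord_max).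

(* Main.v *)
Require Import Defs.
From mathcomp Require Import all_boot zify.
Set Implicit Arguments. Unset Strict Implicit. Unset Printing Implicit Defensive.

Lemma ord3_cases (i j k l : 'I_3) : uniq [:: i; j; k] -> [\/ l = i, l = j | l = k].
Proof.
move: i j k l; do 4! case=> [[|[|[|?]]] ?] //=;
  try (by constructor 1; apply/val_inj); try (by constructor 2; apply/val_inj);
  try (by constructor 3; apply/val_inj).
Qed.

Lemma ord3_others (i : 'I_3) : exists j k : 'I_3, uniq [:: i; j; k].
Proof.
case: i => [[|[|[|?]]] Hi] //.
- by exists (Ordinal (isT : 1 < 3)), (Ordinal (isT : 2 < 3)).
- by exists (Ordinal (isT : 0 < 3)), (Ordinal (isT : 2 < 3)).
- by exists (Ordinal (isT : 0 < 3)), (Ordinal (isT : 1 < 3)).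
Qed.

Lemma uniq3P (T : eqType) (a b c : T) :
  uniq [:: a; b; c] = [&& a != b, a != c & b != c].
Proof. by rewrite /= !inE negb_or andbT andbA. Qed.

Lemma uniq3_swap23 (T : eqType) (a b c : T) : uniq [:: a; b; c] -> uniq [:: a; c; b].
Proof. by rewrite !uniq3P => /and3P[-> -> H]; rewrite eq_sym H. Qed.
Lemma uniq3_swap12 (T : eqType) (a b c : T) : uniq [:: a; b; c] -> uniq [:: b; a; c].
Proof. by rewrite !uniq3P => /and3P[H -> ->]; rewrite eq_sym H. Qed.

Lemma exists3 (P : pred 'I_3) (i j k : 'I_3) : uniq [:: i; j; k] ->
  [exists l, P l] = [|| P i, P j | P k].
Proof.
move=> U; apply/existsP/idP.
  by case=> l; case: (ord3_cases l U) => -> ->; rewrite ?orbT.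
by case/or3P=> H; [exists i | exists j | exists k].
Qed.

Lemma crd_lt n1 n2 n3 (w : vtx n1 n2 n3) l : crd w l < nsz n1 n2 n3 l.
Proof. by case: w => [[a b] c]; case: l => [[|[|[|?]]] ?] //; rewrite /crd /nsz /= ltn_ord. Qed.

Lemma crd_ext n1 n2 n3 (x y : vtx n1 n2 n3) :
  (forall l, crd x l = crd y l) -> x = y.
Proof.
case: x => [[a b] c]; case: y => [[a' b'] c'] H.
have := H (Ordinal (isT : 0 < 3)); have := H (Ordinal (isT : 1 < 3)).
have := H (Ordinal (isT : 2 < 3)); rewrite /crd /= => /val_inj-> /val_inj-> /val_inj->.
done.
Qed.

Lemma crd_emb n1 n2 n3 (w : vtx n1 n2 n3) l : crd (emb w) l = crd w l.
Proof. by case: w => [[a b] c]; case: l => [[|[|[|?]]] ?] //; rewrite /crd /nsz /= ltn_ord. Qed.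

Lemma crd_ucorner n1 n2 n3 l : crd (ucorner n1 n2 n3) l = nsz n1 n2 n3 l.
Proof. by case: l => [[|[|[|?]]] ?]. Qed.

Lemma crd_le n1 n2 n3 (x : vtx n1.+1 n2.+1 n3.+1) l : crd x l <= nsz n1 n2 n3 l.
Proof. by have := crd_lt x l; case: l => [[|[|[|?]]] ?]. Qed.

Definition mk n1 n2 n3 (f : 'I_3 -> nat) : vtx n1.+1 n2.+1 n3.+1 :=
  (inord (f (Ordinal (isT : 0 < 3))), inord (f (Ordinal (isT : 1 < 3))),
   inord (f (Ordinal (isT : 2 < 3)))).

Lemma crd_mk n1 n2 n3 f l : f l <= nsz n1 n2 n3 l -> crd (mk n1 n2 n3 f) l = f l.
Proof.
case: l => [[|[|[|?]]] Hl] //= H; rewrite /crd /=;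
  by rewrite (bool_irrelevance Hl isT) inordK // -(bool_irrelevance Hl isT).
Qed.

Definition pick3 (p q : nat) : nat :=
  if (0 != p) && (0 != q) then 0 else if (1 != p) && (1 != q) then 1 else 2.

Lemma pick3P p q : [/\ pick3 p q <= 2, p != pick3 p q & q != pick3 p q].
Proof.
by rewrite /pick3; case: p => [|[|[|p]]]; case: q => [|[|[|q]]].
Qed.

Lemma walk1 (T : finType) (e : rel T) x y : walk e 1 x y = e x y.
Proof.
apply/existsP/idP; first by case=> z /andP[H /eqP<-].
by move=> H; exists y; rewrite H eqxx.
Qed.

Lemma walk2 (T : finType) (e : rel T) x y :
  walk e 2 x y = [exists z, e x z && e z y].
Proof.
apply/existsP/existsP => -[z /andP[H1 H2]]; exists z; rewrite H1 andTb.
  by move: H2; rewrite -(walk1 e). by rewrite -(walk1 e) in H2.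
Qed.

Section Dist.
Variables n1 n2 n3 : nat.
Hypotheses (h1 : 2 <= n1) (h2 : 2 <= n2) (h3 : 2 <= n3).

Lemma nsz_ge2 l : 2 <= nsz n1 n2 n3 l.
Proof. by case: l => [[|[|[|?]]] ?]. Qed.

Lemma gdist_K (x y : vtx n1.+1 n2.+1 n3.+1) : x != y ->
  gdist (@Kadj n1.+1 n2.+1 n3.+1) x y = Some (if Kadj x y then 1 else 2).
Proof.
move=> nxy.
have hc : 2 < #|vtx n1.+1 n2.+1 n3.+1|.
  rewrite /vtx !card_prod !card_ord.
  nia.
rewrite /gdist; case: #|_| hc => [|[|[|N]]] // _.
rewrite [iota _ _]/= /has /find.
have -> : walk (@Kadj n1.+1 n2.+1 n3.+1) 0 x y = false by exact: negbTE nxy.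
rewrite walk1.
case: (boolP (Kadj x y)) => [_ //|nadj].
suff -> : walk (@Kadj n1.+1 n2.+1 n3.+1) 2 x y by [].
rewrite walk2; apply/existsP.
exists (mk n1 n2 n3 (fun l => pick3 (crd x l) (crd y l))).
apply/andP; split; apply/forallP => l; rewrite crd_mk;
  try (by apply: leq_trans (nsz_ge2 l); case: (pick3P (crd x l) (crd y l)));
  case: (pick3P (crd x l) (crd y l)) => // _ H1 H2; by rewrite // eq_sym.
Qed.

End Dist.

Section Comb.
Variables (n1 n2 n3 : nat) (W : {set vtx n1 n2 n3}).
Local Notation nz := (nsz n1 n2 n3).
Hypothesis B2 : forall (i : 'I_3) (a : nat), a < nz i -> 2 <= #|Wia W i a|.
Hypothesis B3 : forall (i j : 'I_3) (a b : nat), i != j ->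
  #|Wia W i a :&: Wia W j b| <= 1.

Lemma inWia w i a : (w \in Wia W i a) = (w \in W) && (crd w i == a).
Proof. by rewrite inE. Qed.

Lemma Wia_crd w i a : w \in Wia W i a -> crd w i = a.
Proof. by rewrite inWia => /andP[_ /eqP]. Qed.

Lemma Wia_W w i a : w \in Wia W i a -> w \in W.
Proof. by rewrite inWia => /andP[]. Qed.

Lemma uniq2 i j a b p q : i != j -> p \in Wia W i a -> p \in Wia W j b ->
  q \in Wia W i a -> q \in Wia W j b -> p = q.
Proof.
move=> ij p1 p2 q1 q2; have /card_le1_eqP H := B3 a b ij.
by apply: H; rewrite inE ?p1 ?p2 ?q1 ?q2.
Qed.

Lemma neq_crd l a b p q : p \in Wia W l a -> q \in Wia W l b -> a != b -> p != q.
Proof. by move=> /Wia_crd <- /Wia_crd <-; apply: contra => /eqP->. Qed.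

Definition Sf (c : 'I_3 -> nat) (w : vtx n1 n2 n3) : bool :=
  [exists l, crd w l == c l].

Lemma card_le1_sub (A : {set vtx n1 n2 n3}) p :
  (forall w, w \in A -> w = p) -> #|A| <= 1.
Proof.
move=> H; apply: (@leq_trans #|[set p]|); last by rewrite cards1.
by apply/subset_leq_card/subsetP => w /H ->; rewrite set11.
Qed.

Lemma cover (cy : 'I_3 -> nat) i j k a : uniq [:: i; j; k] -> a < nz i ->
  cy i != a -> (forall w, w \in Wia W i a -> Sf cy w) ->
  [/\ cy j < nz j, cy k < nz k & exists p q, [/\ p != q, Wia W i a = [set p; q],
     p \in Wia W j (cy j) & q \in Wia W k (cy k)]].
Proof.
move=> U ha hy H.
have [ij ik jk] : [/\ i != j, i != k & j != k] by move: U; rewrite uniq3P => /and3P.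
set A := Wia W i a.
have cov w : w \in A -> (w \in Wia W j (cy j)) || (w \in Wia W k (cy k)).
  move=> wA; have := H w wA; rewrite /Sf (exists3 _ U) => /or3P[].
  - by rewrite (Wia_crd wA) eq_sym (negbTE hy).
  - by rewrite inWia (Wia_W wA) => ->.
  - by rewrite !inWia (Wia_W wA) => ->; rewrite orbT.
have c2 := B2 ha.
have X1 := card_le1_eqP (B3 a (cy j) ij).
have Y1 := card_le1_eqP (B3 a (cy k) ik).
have [p pX] : exists p, p \in A :&: Wia W j (cy j).
  apply/set0Pn; apply: contraTneq c2 => X0; rewrite -ltnNge ltnS.
  case: (eqVneq A set0) => [A0|/set0Pn[w wA]]; first by rewrite -/A A0 cards0.
  apply: (card_le1_sub (p:=w)) => w' w'A.
  have := cov _ w'A; have := cov _ wA.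
  have nX v : v \in A -> v \notin Wia W j (cy j).
    move=> vA; apply/negP => vj.
    have : v \in A :&: Wia W j (cy j) by rewrite inE vA.
    by rewrite X0 inE.
  rewrite (negbTE (nX _ wA)) (negbTE (nX _ w'A)) /= => wk w'k.
  by apply: Y1; rewrite inE ?wA ?w'A ?wk ?w'k.
have [q qY] : exists q, q \in A :&: Wia W k (cy k).
  apply/set0Pn; apply: contraTneq c2 => Y0; rewrite -ltnNge ltnS.
  apply: (card_le1_sub (p:=p)) => w' w'A.
  have := cov _ w'A.
  have nY v : v \in A -> v \notin Wia W k (cy k).
    move=> vA; apply/negP => vj.
    have : v \in A :&: Wia W k (cy k) by rewrite inE vA.
    by rewrite Y0 inE.
  rewrite (negbTE (nY _ w'A)) orbF => w'j.
  by apply: X1; rewrite // inE w'A w'j.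
have /andP[pA pj'] : (p \in A) && (p \in Wia W j (cy j)) by rewrite -in_setI.
have /andP[qA qk'] : (q \in A) && (q \in Wia W k (cy k)) by rewrite -in_setI.
have pj := Wia_crd pj'; have qk := Wia_crd qk'.
have eqA w : w \in A -> w = p \/ w = q.
  move=> wA; case/orP: (cov _ wA) => wh.
    by left; apply: X1; rewrite // inE wA.
  by right; apply: Y1; rewrite // inE wA.
split.
- by rewrite -pj crd_lt.
- by rewrite -qk crd_lt.
exists p, q; split=> //.
  apply/eqP => epq.
  have : #|A| <= 1 by apply: (card_le1_sub (p:=p)) => w /eqA[]//->.
  by move/leq_ltn_trans/(_ c2); rewrite ltnn.
apply/setP => w; rewrite in_set2; apply/idP/idP.
  by case/eqA => ->; rewrite eqxx ?orbT.
by case/orP => /eqP->.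
Qed.


Lemma set2C (p q : vtx n1 n2 n3) : [set p; q] = [set q; p].
Proof. by apply/setP => x; rewrite !in_set2 orbC. Qed.

Lemma mk_stick i a p q : Wia W i a = [set p; q] -> stick W i p q.
Proof. by move=> H; exists a; split=> //; apply/set0Pn; exists p; rewrite set21. Qed.

Lemma mk_co i b p q : p \in Wia W i b -> q \in Wia W i b -> cohedge W i p q.
Proof.
move=> hp hq; exists (Wia W i b); split; last by [].
by exists b; split=> //; apply/set0Pn; exists p.
Qed.

Lemma rainbow_of i j k a b c p q p' q' : uniq [:: i; j; k] ->
  p != q -> Wia W i a = [set p; q] -> p \in Wia W j b -> q \in Wia W k c ->
  p' != q' -> Wia W j b = [set p'; q'] -> p' \in Wia W i a -> q' \in Wia W k c ->
  rainbow_tri W.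
Proof.
move=> U npq HX pj qk npq' HY p'i q'k.
have [ij ik jk] : [/\ i != j, i != k & j != k] by move: U; rewrite uniq3P => /and3P.
have pi : p \in Wia W i a by rewrite HX set21.
have qi : q \in Wia W i a by rewrite HX set22.
have p'j : p' \in Wia W j b by rewrite HY set21.
have q'j : q' \in Wia W j b by rewrite HY set22.
have epp : p = p' by apply: (uniq2 ij pi pj p'i p'j).
subst p'.
have nqq' : q != q'.
  apply/eqP => e; subst q'; move/eqP: npq; apply.
  by apply: (uniq2 ij pi pj qi q'j).
exists q, p, q', i, j, k; split=> //.
- by rewrite /= !inE !negb_or eq_sym npq nqq' npq'.
- by rewrite /= (Wia_W qi) (Wia_W pi) (Wia_W q'k).
- split; first by apply: (mk_stick (a:=a)); rewrite HX set2C.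
  + by apply: (mk_stick (a:=b)).
  + by apply: (mk_co qk q'k).
Qed.

Lemma bad4_of i j k a a' b c p q p' q' : uniq [:: i; j; k] -> a != a' ->
  p != q -> Wia W i a = [set p; q] -> p \in Wia W j b -> q \in Wia W k c ->
  p' != q' -> Wia W i a' = [set p'; q'] -> p' \in Wia W j b -> q' \in Wia W k c ->
  bad4cycle W.
Proof.
move=> U naa npq HX pj qk npq' HY p'j q'k.
have pi : p \in Wia W i a by rewrite HX set21.
have qi : q \in Wia W i a by rewrite HX set22.
have p'i : p' \in Wia W i a' by rewrite HY set21.
have q'i : q' \in Wia W i a' by rewrite HY set22.
have h1 := neq_crd qi p'i naa; have h2 := neq_crd qi q'i naa.
have h3 := neq_crd pi p'i naa; have h4 := neq_crd pi q'i naa.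
exists q, p, p', q', i, j, k; split=> //.
- by rewrite /= !inE !negb_or eq_sym npq h1 h2 h3 h4 npq'.
- by rewrite /= (Wia_W qi) (Wia_W pi) (Wia_W p'i) (Wia_W q'i).
- split.
  + by apply: (mk_stick (a:=a)); rewrite HX set2C.
  + by apply: (mk_stick (a:=a')).
  + by apply: (mk_co pj p'j).
  + by apply: (mk_co q'k qk).
Qed.

Lemma hex_of i j k ai aj ak bi bj bk eij eik eji ejk eki ekj :
  uniq [:: i; j; k] -> ai != bi -> aj != bj -> ak != bk ->
  Wia W i ai = [set eij; eik] -> Wia W j aj = [set eji; ejk] ->
  Wia W k ak = [set eki; ekj] ->
  Wia W i bi = [set eji; eki] -> Wia W j bj = [set eij; ekj] ->
  Wia W k bk = [set eik; ejk] ->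
  eij != eik -> eji != ejk -> eki != ekj -> eji != eki -> eij != ekj -> eik != ejk ->
  plainhex W.
Proof.
move=> U nai naj nak Xi Xj Xk Yi Yj Yk d1 d2 d3 d4 d5 d6.
have eij1 : eij \in Wia W i ai by rewrite Xi set21.
have eik1 : eik \in Wia W i ai by rewrite Xi set22.
have eji1 : eji \in Wia W j aj by rewrite Xj set21.
have ejk1 : ejk \in Wia W j aj by rewrite Xj set22.
have eki1 : eki \in Wia W k ak by rewrite Xk set21.
have ekj1 : ekj \in Wia W k ak by rewrite Xk set22.
have eji2 : eji \in Wia W i bi by rewrite Yi set21.
have eki2 : eki \in Wia W i bi by rewrite Yi set22.
have eij2 : eij \in Wia W j bj by rewrite Yj set21.
have ekj2 : ekj \in Wia W j bj by rewrite Yj set22.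
have eik2 : eik \in Wia W k bk by rewrite Yk set21.
have ejk2 : ejk \in Wia W k bk by rewrite Yk set22.
have nbi : bi != ai by rewrite eq_sym.
have nbj : bj != aj by rewrite eq_sym.
have nbk : bk != ak by rewrite eq_sym.
have u13 := neq_crd eik2 ekj1 nbk.
have u14 := neq_crd eik1 eki2 nai.
have u15 := neq_crd eik1 eji2 nai.
have u24 := neq_crd eij1 eki2 nai.
have u25 := neq_crd eij1 eji2 nai.
have u26 := neq_crd eij2 ejk1 nbj.
have u35 := neq_crd ekj2 eji1 nbj.
have u36 := neq_crd ekj2 ejk1 nbj.
have u46 := neq_crd eki1 ejk2 nak.
exists eik, eij, ekj, eki, eji, ejk, i, j, k; split=> //.
- rewrite /= !inE !negb_or.
  by rewrite eq_sym d1 u13 u14 u15 d6 d5 u24 u25 u26 eq_sym d3 u35 u36 eq_sym d4 u46 d2.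
- by rewrite /= (Wia_W eik1) (Wia_W eij1) (Wia_W ekj1) (Wia_W eki1) (Wia_W eji1) (Wia_W ejk1).
- split.
  + by apply: (mk_stick (a:=ai)); rewrite Xi set2C.
  + by apply: (mk_stick (a:=bi)); rewrite Yi set2C.
  + by apply: (mk_stick (a:=bj)).
  + by apply: (mk_stick (a:=aj)).
  + split.
    * by apply: (mk_stick (a:=ak)); rewrite Xk set2C.
    * by apply: (mk_stick (a:=bk)); rewrite Yk set2C.
Qed.


Section Dir2.
Variables cx cy : 'I_3 -> nat.
Hypothesis HS : forall w, w \in W -> Sf cx w = Sf cy w.

Lemma xcov i j k : uniq [:: i; j; k] -> cx i < nz i -> cx i != cy i ->
  [/\ cy j < nz j, cy k < nz k & exists p q, [/\ p != q, Wia W i (cx i) = [set p; q],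
     p \in Wia W j (cy j) & q \in Wia W k (cy k)]].
Proof.
move=> U hx hxy; apply: cover => //; first by rewrite eq_sym.
move=> w wi; rewrite -HS ?(Wia_W wi) //; apply/existsP; exists i.
by rewrite (Wia_crd wi).
Qed.
End Dir2.

Lemma uniq3_rot (T : eqType) (a b c : T) : uniq [:: a; b; c] -> uniq [:: c; a; b].
Proof. by move=> /uniq3_swap23 /uniq3_swap12. Qed.

Lemma LB' cx cy i j k : (forall w, w \in W -> Sf cx w = Sf cy w) ->
  uniq [:: i; j; k] -> cx i < nz i -> cx i != cy i -> ~~ (cy i < nz i) ->
  cx j = nz j -> cy j < nz j -> rainbow_tri W.
Proof.
move=> HS U xi nxy nyi xj yj.
have HS' : forall w, w \in W -> Sf cy w = Sf cx w by move=> w /HS->.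
have [_ xk [p' [q' [npq' HY p'i q'k]]]] :=
  xcov HS' (uniq3_swap12 U) yj ltac:(by rewrite xj neq_ltn yj).
case: (eqVneq (cx k) (cy k)) => exk.
  have [_ _ [p [q [npq HX pj qk]]]] := xcov HS U xi nxy.
  by apply: (rainbow_of U npq HX pj qk npq' HY p'i); rewrite -exk.
by have [yi _ _] := xcov HS (uniq3_rot U) xk exk; rewrite yi in nyi.
Qed.

Lemma LB cx cy i : (forall w, w \in W -> Sf cx w = Sf cy w) ->
  (forall l, cx l <= nz l) -> (forall l, cy l <= nz l) ->
  cx i < nz i -> cx i != cy i ->
  [exists l, cx l == nz l] -> [exists l, cy l == nz l] -> rainbow_tri W.
Proof.
move=> HS bx byy xi nxy ex ey.
have [j [k U]] := ord3_others i.
have [yj yk _] := xcov HS U xi nxy.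
have nyi : ~~ (cy i < nz i).
  move: ey; rewrite (exists3 _ U) => /or3P[/eqP->|/eqP e|/eqP e]; first by rewrite ltnn.
  - by rewrite e ltnn in yj.
  - by rewrite e ltnn in yk.
move: ex; rewrite (exists3 _ U) => /or3P[/eqP e|/eqP e|/eqP e].
- by rewrite e ltnn in xi.
- by apply: (LB' HS U xi nxy nyi e yj).
- by apply: (LB' HS (uniq3_swap23 U) xi nxy nyi e yk).
Qed.

Lemma dir2 cx cy : (forall l, cx l <= nz l) -> (forall l, cy l <= nz l) ->
  (exists l, cx l != cy l) -> (exists l, cx l < nz l) -> (exists l, cy l < nz l) ->
  [exists l, cx l == nz l] = [exists l, cy l == nz l] ->
  (forall w, w \in W -> Sf cx w = Sf cy w) ->
  [\/ bad4cycle W, plainhex W | rainbow_tri W].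
Proof.
move=> bx byy [i nxy] _ _ eu HS.
have HS' : forall w, w \in W -> Sf cy w = Sf cx w by move=> w /HS->.
have [j [k U]] := ord3_others i.
case: (boolP [exists l, cx l == nz l]) => ex.
  have ey := ex; rewrite eu in ey.
  apply: Or33.
  case: (ltnP (cx i) (nz i)) => xi; first exact: (LB HS bx byy xi nxy ex ey).
  have yi : cy i < nz i.
    by rewrite ltn_neqAle byy andbT; move: nxy; rewrite (@anti_leq (cx i) (nz i)) ?xi ?bx // eq_sym.
  by apply: (LB HS' byy bx yi _ ey ex); rewrite eq_sym.
have ey := ex; rewrite eu in ey.
have ax l : cx l < nz l.
  rewrite ltn_neqAle bx andbT; apply: contra ex => e; by apply/existsP; exists l.
have ay l : cy l < nz l.
  rewrite ltn_neqAle byy andbT; apply: contra ey => e; by apply/existsP; exists l.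
have Uik := uniq3_swap23 U.
have Uji := uniq3_swap12 U.
have Ukij := uniq3_rot U.
have [ij ik jk] : [/\ i != j, i != k & j != k] by move: U; rewrite uniq3P => /and3P.
have [_ _ [p [q [npq HX pj qk]]]] := xcov HS U (ax i) nxy.
have [_ _ [p' [q' [npq' HY p'j q'k]]]] := xcov HS' U (ay i) ltac:(by rewrite eq_sym).
case: (eqVneq (cx j) (cy j)) => exj; case: (eqVneq (cx k) (cy k)) => exk.
- apply: Or31; apply: (bad4_of U nxy npq HX pj qk npq' HY); by rewrite -?exj -?exk.
- apply: Or33.
  have [_ _ [r [s [nrs HZ ri sj]]]] := xcov HS' Ukij (ay k) ltac:(by rewrite eq_sym).
  have [_ _ [t [u [ntu HX' tk uj]]]] := xcov HS Uik (ax i) nxy.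
  by apply: (rainbow_of Uik ntu HX' tk uj nrs HZ ri); rewrite -exj.
- apply: Or33.
  have [_ _ [r [s [nrs HZ ri sk]]]] := xcov HS' Uji (ay j) ltac:(by rewrite eq_sym).
  by apply: (rainbow_of U npq HX pj qk nrs HZ ri); rewrite -exk.
- apply: Or32.
  have [_ _ [eij [eik [d1 Xi eij2 eik2]]]] := xcov HS U (ax i) nxy.
  have [_ _ [eji [ejk [d2 Xj eji2 ejk2]]]] := xcov HS Uji (ax j) exj.
  have [_ _ [eki [ekj [d3 Xk eki2 ekj2]]]] := xcov HS Ukij (ax k) exk.
  have [_ _ [f1 [f2 [d4 Yi f1j f2k]]]] := xcov HS' U (ay i) ltac:(by rewrite eq_sym).
  have [_ _ [g1 [g2 [d5 Yj g1i g2k]]]] := xcov HS' Uji (ay j) ltac:(by rewrite eq_sym).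
  have [_ _ [h1 [h2 [d6 Yk h1i h2j]]]] := xcov HS' Ukij (ay k) ltac:(by rewrite eq_sym).
  have eji1 : eji \in Wia W j (cx j) by rewrite Xj set21.
  have ejk1 : ejk \in Wia W j (cx j) by rewrite Xj set22.
  have eij1 : eij \in Wia W i (cx i) by rewrite Xi set21.
  have eik1 : eik \in Wia W i (cx i) by rewrite Xi set22.
  have eki1 : eki \in Wia W k (cx k) by rewrite Xk set21.
  have ekj1 : ekj \in Wia W k (cx k) by rewrite Xk set22.
  have f1i : f1 \in Wia W i (cy i) by rewrite Yi set21.
  have f2i : f2 \in Wia W i (cy i) by rewrite Yi set22.
  have g1j : g1 \in Wia W j (cy j) by rewrite Yj set21.
  have g2j : g2 \in Wia W j (cy j) by rewrite Yj set22.
  have h1k : h1 \in Wia W k (cy k) by rewrite Yk set21.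
  have h2k : h2 \in Wia W k (cy k) by rewrite Yk set22.
  have ji : j != i by rewrite eq_sym.
  have ki : k != i by rewrite eq_sym.
  have kj : k != j by rewrite eq_sym.
  have ef1 : f1 = eji by apply: (uniq2 ji f1j f1i eji1 eji2).
  subst f1.
  have ef2 : f2 = eki by apply: (uniq2 ki f2k f2i eki1 eki2).
  subst f2.
  have eg1 : g1 = eij by apply: (uniq2 ij g1i g1j eij1 eij2).
  subst g1.
  have eg2 : g2 = ekj by apply: (uniq2 kj g2k g2j ekj1 ekj2).
  subst g2.
  have eh1 : h1 = eik by apply: (uniq2 ik h1i h1k eik1 eik2).
  subst h1.
  have eh2 : h2 = ejk by apply: (uniq2 jk h2j h2k ejk1 ejk2).
  subst h2.
  by apply: (hex_of U nxy exj exk Xi Xj Xk Yi Yj Yk d1 d2 d3).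
Qed.

End Comb.

Definition sel (i j : 'I_3) (a b c : nat) (l : 'I_3) : nat :=
  if l == i then a else if l == j then b else c.

Lemma selE i j k a b c : uniq [:: i; j; k] ->
  [/\ sel i j a b c i = a, sel i j a b c j = b & sel i j a b c k = c].
Proof.
rewrite uniq3P => /and3P[ij ik jk]; rewrite /sel eqxx eq_sym (negbTE ij).
by rewrite eqxx eq_sym (negbTE ik) eq_sym (negbTE jk).
Qed.

Lemma uniq_neq (T : eqType) (s : seq T) (x0 : T) i j : uniq s ->
  i < size s -> j < size s -> i != j -> nth x0 s i != nth x0 s j.
Proof. by move=> U hi hj; rewrite nth_uniq. Qed.

Lemma or_absorb (A A' R : bool) : (A -> R) -> (A' -> R) -> A || R = A' || R.
Proof. by case: R; case: A; case: A' => //= H1 H2; first [move: (H1 isT) | move: (H2 isT)]. Qed.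

Section Main.
Variables (n1 n2 n3 : nat) (W : {set vtx n1 n2 n3}).
Hypotheses (h1 : 2 <= n1) (h2 : 2 <= n2) (h3 : 2 <= n3).
Local Notation nz := (nsz n1 n2 n3).
Hypothesis B2 : forall (i : 'I_3) (a : nat), a < nz i -> 2 <= #|Wia W i a|.
Hypothesis B3 : forall (i j : 'I_3) (a b : nat), i != j ->
  #|Wia W i a :&: Wia W j b| <= 1.

Local Notation T' := (vtx n1.+1 n2.+1 n3.+1).
Local Notation W' := ([set emb w | w in W] :|: [set ucorner n1 n2 n3]).

Lemma sel_le i j k a b c : uniq [:: i; j; k] -> a <= nz i -> b <= nz j -> c <= nz k ->
  forall l, sel i j a b c l <= nz l.
Proof.
move=> U ha hb hc l; have [e1 e2 e3] := selE a b c U.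
by case: (ord3_cases l U) => ->; rewrite ?e1 ?e2 ?e3.
Qed.

Lemma Sf_sel i j k a b c (w : vtx n1 n2 n3) : uniq [:: i; j; k] ->
  Sf (sel i j a b c) w = [|| crd w i == a, crd w j == b | crd w k == c].
Proof. by move=> U; have [e1 e2 e3] := selE a b c U; rewrite /Sf (exists3 _ U) e1 e2 e3. Qed.

Lemma ex_sel i j k a b c : uniq [:: i; j; k] ->
  [exists l, sel i j a b c l == nz l] = [|| a == nz i, b == nz j | c == nz k].
Proof. by move=> U; have [e1 e2 e3] := selE a b c U; rewrite (exists3 _ U) e1 e2 e3. Qed.

Lemma Kadj_ex (x z : T') : Kadj x z = ~~ [exists l, crd x l == crd z l].
Proof. by rewrite negb_exists. Qed.

Lemma not_res (fx fy : 'I_3 -> nat) :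
  (forall l, fx l <= nz l) -> (forall l, fy l <= nz l) ->
  (exists l, fx l != fy l) -> (exists l, fx l < nz l) -> (exists l, fy l < nz l) ->
  [exists l, fx l == nz l] = [exists l, fy l == nz l] ->
  (forall w, w \in W -> Sf fx w = Sf fy w) ->
  (forall w, w \in W -> ~ (forall l, crd w l = fx l)) ->
  (forall w, w \in W -> ~ (forall l, crd w l = fy l)) ->
  ~ resolving (@Kadj n1.+1 n2.+1 n3.+1) W'.
Proof.
move=> bx byy [l0 nl0] [lx hx] [ly hy] eu HS nWx nWy R.
set x : T' := mk n1 n2 n3 fx; set y : T' := mk n1 n2 n3 fy.
have cx l : crd x l = fx l by rewrite crd_mk.
have cy l : crd y l = fy l by rewrite crd_mk.
have notW' (z : T') f : (forall l, crd z l = f l) -> (exists l, f l < nz l) ->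
    (forall w, w \in W -> ~ (forall l, crd w l = f l)) -> z \notin W'.
  move=> cz [l fl] nW; rewrite in_setU; apply/norP; split.
    by apply/imsetP => -[w wW ez]; apply: (nW w wW) => l'; rewrite -cz ez crd_emb.
  by apply/set1P => ez; rewrite -cz ez crd_ucorner ltnn in fl.
have xW : x \notin W' by apply: (notW' x fx cx); [exists lx | ].
have yW : y \notin W' by apply: (notW' y fy cy); [exists ly | ].
have nxy : x <> y by move=> e; move: nl0; rewrite -cx -cy e eqxx.
have [z zW] := R x y xW yW nxy; apply.
have xz : x != z by apply: contraNneq xW => ->.
have yz : y != z by apply: contraNneq yW => ->.
rewrite !gdist_K // !Kadj_ex.
suff -> : [exists l, crd x l == crd z l] = [exists l, crd y l == crd z l] by [].
case/setUP: zW => [/imsetP[w wW ->]|/set1P->].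
  have := HS w wW; rewrite /Sf => e.
  transitivity [exists l, crd w l == fx l].
    by apply: eq_existsb => l; rewrite cx crd_emb eq_sym.
  by rewrite e; apply: eq_existsb => l; rewrite cy crd_emb eq_sym.
transitivity [exists l, fx l == nz l].
  by apply: eq_existsb => l; rewrite cx crd_ucorner.
by rewrite eu; apply: eq_existsb => l; rewrite cy crd_ucorner.
Qed.

Lemma mem2 (w : vtx n1 n2 n3) l v p q : Wia W l v = [set p; q] -> w \in W ->
  crd w l == v -> w = p \/ w = q.
Proof. move=> H wW e; have : w \in Wia W l v by rewrite inWia wW e. by rewrite H => /set2P. Qed.

Lemma Wlt i a p : p \in Wia W i a -> a < nz i.
Proof. by move=> /Wia_crd <-; apply: crd_lt. Qed.

Lemma bad4_nres : bad4cycle W -> ~ resolving (@Kadj n1.+1 n2.+1 n3.+1) W'.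
Proof.
case=> w1 [w2 [w3 [w4 [i [j [k [Hu HW U [[a [Ha _]] [a' [Ha' _]]
  [S2 [[b [Hb _]] [w2S w3S]]] [S4 [[c [Hc _]] [w4S w1S]]]]]]]]]]].
subst S2 S4.
have [ij ik jk] : [/\ i != j, i != k & j != k] by move: U; rewrite uniq3P => /and3P.
have w1i : w1 \in Wia W i a by rewrite Ha set21.
have w2i : w2 \in Wia W i a by rewrite Ha set22.
have w3i : w3 \in Wia W i a' by rewrite Ha' set21.
have w4i : w4 \in Wia W i a' by rewrite Ha' set22.
have d12 : w1 != w2 := @uniq_neq _ _ w1 0 1 Hu isT isT isT.
have d13 : w1 != w3 := @uniq_neq _ _ w1 0 2 Hu isT isT isT.
have d23 : w2 != w3 := @uniq_neq _ _ w1 1 2 Hu isT isT isT.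
have d34 : w3 != w4 := @uniq_neq _ _ w1 2 3 Hu isT isT isT.
have ha := Wlt w1i; have ha' := Wlt w3i; have hb := Wlt w2S; have hc := Wlt w1S.
have naa : a != a'.
  apply/eqP => e; move: w3i; rewrite -e Ha => /set2P[e'|e'].
    by rewrite e' eqxx in d13.
  by rewrite e' eqxx in d23.
have [e1 e2 e3] := selE a b c U.
have [f1 f2 f3] := selE a' b c U.
apply: (not_res (fx := sel i j a b c) (fy := sel i j a' b c)).
- exact: sel_le U (ltnW ha) (ltnW hb) (ltnW hc).
- exact: sel_le U (ltnW ha') (ltnW hb) (ltnW hc).
- by exists i; rewrite e1 f1.
- by exists i; rewrite e1.
- by exists i; rewrite f1.
- by rewrite !(ex_sel _ _ _ U) (ltn_eqF ha) (ltn_eqF ha') (ltn_eqF hb) (ltn_eqF hc).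
- move=> w wW; rewrite !(Sf_sel _ _ _ _ U); apply: or_absorb.
    by case/(mem2 Ha wW) => ->; rewrite ?(Wia_crd w1S) ?(Wia_crd w2S) eqxx ?orbT.
  by case/(mem2 Ha' wW) => ->; rewrite ?(Wia_crd w3S) ?(Wia_crd w4S) eqxx ?orbT.
- move=> w wW e; have wi : w \in Wia W i a by rewrite inWia wW e e1 eqxx.
  have wj : w \in Wia W j b by rewrite inWia wW e e2 eqxx.
  have wk : w \in Wia W k c by rewrite inWia wW e e3 eqxx.
  have E2 := uniq2 B3 ij wi wj w2i w2S; have E1 := uniq2 B3 ik wi wk w1i w1S.
  by rewrite -E1 -E2 eqxx in d12.
- move=> w wW e; have wi : w \in Wia W i a' by rewrite inWia wW e f1 eqxx.
  have wj : w \in Wia W j b by rewrite inWia wW e f2 eqxx.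
  have wk : w \in Wia W k c by rewrite inWia wW e f3 eqxx.
  have E3 := uniq2 B3 ij wi wj w3i w3S; have E4 := uniq2 B3 ik wi wk w4i w4S.
  by rewrite -E3 -E4 eqxx in d34.
Qed.


Lemma hex_nres : plainhex W -> ~ resolving (@Kadj n1.+1 n2.+1 n3.+1) W'.
Proof.
case=> w1 [w2 [w3 [w4 [w5 [w6 [i [j [k [Hu HW U [[a [Ha _]] [a' [Ha' _]]
  [b [Hb _]] [b' [Hb' _]] [[c [Hc _]] [c' [Hc' _]]]]]]]]]]]]].
have [ij ik jk] : [/\ i != j, i != k & j != k] by move: U; rewrite uniq3P => /and3P.
have w1i : w1 \in Wia W i a by rewrite Ha set21.
have w2i : w2 \in Wia W i a by rewrite Ha set22.
have w4i : w4 \in Wia W i a' by rewrite Ha' set21.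
have w5i : w5 \in Wia W i a' by rewrite Ha' set22.
have w2j : w2 \in Wia W j b by rewrite Hb set21.
have w3j : w3 \in Wia W j b by rewrite Hb set22.
have w5j : w5 \in Wia W j b' by rewrite Hb' set21.
have w6j : w6 \in Wia W j b' by rewrite Hb' set22.
have w3k : w3 \in Wia W k c by rewrite Hc set21.
have w4k : w4 \in Wia W k c by rewrite Hc set22.
have w6k : w6 \in Wia W k c' by rewrite Hc' set21.
have w1k : w1 \in Wia W k c' by rewrite Hc' set22.
have c1i := Wia_crd w1i; have c2i := Wia_crd w2i; have c4i := Wia_crd w4i.
have c5i := Wia_crd w5i; have c2j := Wia_crd w2j; have c3j := Wia_crd w3j.
have c5j := Wia_crd w5j; have c6j := Wia_crd w6j; have c3k := Wia_crd w3k.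
have c4k := Wia_crd w4k; have c6k := Wia_crd w6k; have c1k := Wia_crd w1k.
have d14 : w1 != w4 := @uniq_neq _ _ w1 0 3 Hu isT isT isT.
have d15 : w1 != w5 := @uniq_neq _ _ w1 0 4 Hu isT isT isT.
have d16 : w1 != w6 := @uniq_neq _ _ w1 0 5 Hu isT isT isT.
have d24 : w2 != w4 := @uniq_neq _ _ w1 1 3 Hu isT isT isT.
have d25 : w2 != w5 := @uniq_neq _ _ w1 1 4 Hu isT isT isT.
have d26 : w2 != w6 := @uniq_neq _ _ w1 1 5 Hu isT isT isT.
have d34 : w3 != w4 := @uniq_neq _ _ w1 2 3 Hu isT isT isT.
have d35 : w3 != w5 := @uniq_neq _ _ w1 2 4 Hu isT isT isT.
have ha := Wlt w1i; have ha' := Wlt w4i; have hb := Wlt w2j; have hb' := Wlt w5j.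
have hc := Wlt w3k; have hc' := Wlt w1k.
have naa : a != a'.
  apply/eqP => e; move: w4i; rewrite -e Ha => /set2P[e'|e'].
    by rewrite e' eqxx in d14.
  by rewrite e' eqxx in d24.
have [e1 e2 e3] := selE a b' c U.
have [f1 f2 f3] := selE a' b c' U.
apply: (not_res (fx := sel i j a b' c) (fy := sel i j a' b c')).
- exact: sel_le U (ltnW ha) (ltnW hb') (ltnW hc).
- exact: sel_le U (ltnW ha') (ltnW hb) (ltnW hc').
- by exists i; rewrite e1 f1.
- by exists i; rewrite e1.
- by exists i; rewrite f1.
- by rewrite !(ex_sel _ _ _ U) (ltn_eqF ha) (ltn_eqF ha') (ltn_eqF hb) (ltn_eqF hc)
     (ltn_eqF hb') (ltn_eqF hc').
- move=> w wW; rewrite !(Sf_sel _ _ _ _ U); apply/idP/idP => /or3P[H|H|H].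
  + by case/(mem2 Ha wW): H => ->; rewrite ?c1i ?c1k ?c2i ?c2j ?c3j ?c3k ?c4k ?c4i ?c5i ?c5j ?c6j ?c6k eqxx ?orbT.
  + by case/(mem2 Hb' wW): H => ->; rewrite ?c1i ?c1k ?c2i ?c2j ?c3j ?c3k ?c4k ?c4i ?c5i ?c5j ?c6j ?c6k eqxx ?orbT.
  + by case/(mem2 Hc wW): H => ->; rewrite ?c1i ?c1k ?c2i ?c2j ?c3j ?c3k ?c4k ?c4i ?c5i ?c5j ?c6j ?c6k eqxx ?orbT.
  + by case/(mem2 Ha' wW): H => ->; rewrite ?c1i ?c1k ?c2i ?c2j ?c3j ?c3k ?c4k ?c4i ?c5i ?c5j ?c6j ?c6k eqxx ?orbT.
  + by case/(mem2 Hb wW): H => ->; rewrite ?c1i ?c1k ?c2i ?c2j ?c3j ?c3k ?c4k ?c4i ?c5i ?c5j ?c6j ?c6k eqxx ?orbT.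
  + by case/(mem2 Hc' wW): H => ->; rewrite ?c1i ?c1k ?c2i ?c2j ?c3j ?c3k ?c4k ?c4i ?c5i ?c5j ?c6j ?c6k eqxx ?orbT.
- move=> w wW e.
  have := mem2 Ha wW (introT eqP (etrans (e i) e1)).
  have := mem2 Hb' wW (introT eqP (etrans (e j) e2)).
  move=> m2 m1; case: m1 m2 => -> [E|E]; [move: d15|move: d16|move: d25|move: d26];
    by move/eqP.
- move=> w wW e.
  have := mem2 Ha' wW (introT eqP (etrans (e i) f1)).
  have := mem2 Hb wW (introT eqP (etrans (e j) f2)).
  move=> m2 m1; case: m1 m2 => -> [E|E]; [move: d24|move: d34|move: d25|move: d35];
    by rewrite eq_sym; move/eqP.
Qed.


Lemma rainbow_nres : rainbow_tri W -> ~ resolving (@Kadj n1.+1 n2.+1 n3.+1) W'.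
Proof.
case=> w1 [w2 [w3 [i [j [k [Hu HW U [[a [Ha _]] [b [Hb _]]
  [S [[c [Hc _]] [w1S w3S]]]]]]]]]].
subst S.
have [ij ik jk] : [/\ i != j, i != k & j != k] by move: U; rewrite uniq3P => /and3P.
have w1i : w1 \in Wia W i a by rewrite Ha set21.
have w2i : w2 \in Wia W i a by rewrite Ha set22.
have w2j : w2 \in Wia W j b by rewrite Hb set21.
have w3j : w3 \in Wia W j b by rewrite Hb set22.
have c1i := Wia_crd w1i; have c2i := Wia_crd w2i; have c2j := Wia_crd w2j.
have c3j := Wia_crd w3j; have c1k := Wia_crd w1S; have c3k := Wia_crd w3S.
have ha := Wlt w1i; have hb := Wlt w2j; have hc := Wlt w1S.
have [e1 e2 e3] := selE a (nz j) c U.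
have [f1 f2 f3] := selE (nz i) b c U.
apply: (not_res (fx := sel i j a (nz j) c) (fy := sel i j (nz i) b c)).
- exact: sel_le U (ltnW ha) (leqnn _) (ltnW hc).
- exact: sel_le U (leqnn _) (ltnW hb) (ltnW hc).
- by exists i; rewrite e1 f1 (ltn_eqF ha).
- by exists i; rewrite e1.
- by exists k; rewrite f3.
- by rewrite !(ex_sel _ _ _ U) !eqxx !orbT.
- move=> w wW; rewrite !(Sf_sel _ _ _ _ U) (ltn_eqF (crd_lt w j)) (ltn_eqF (crd_lt w i)) /=.
  apply/idP/idP => /orP[H|H]; rewrite ?H ?orbT //.
  + by case/(mem2 Ha wW): H => ->; rewrite ?c1i ?c1k ?c2i ?c2j ?c3j ?c3k eqxx ?orbT.
  + by case/(mem2 Hb wW): H => ->; rewrite ?c1i ?c1k ?c2i ?c2j ?c3j ?c3k eqxx ?orbT.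
- by move=> w wW /(_ j); rewrite e2 => e; have := crd_lt w j; rewrite e ltnn.
- by move=> w wW /(_ i); rewrite f1 => e; have := crd_lt w i; rewrite e ltnn.
Qed.

Lemma res_of : ~ bad4cycle W -> ~ plainhex W -> ~ rainbow_tri W ->
  resolving (@Kadj n1.+1 n2.+1 n3.+1) W'.
Proof.
move=> nb nh nr x y xW yW nxy.
case: (boolP [exists z in W', Kadj x z != Kadj y z]) => [/exists_inP[z zW hz]|].
  exists z => //.
  have xz : x != z by apply: contraNneq xW => ->.
  have yz : y != z by apply: contraNneq yW => ->.
  rewrite !gdist_K //; move: hz; by case: (Kadj x z); case: (Kadj y z).
rewrite negb_exists_in => /forall_inP HK; exfalso.
have uW : ucorner n1 n2 n3 \in W' by rewrite in_setU set11 orbT.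
have eW w : w \in W -> emb w \in W' by move=> wW; rewrite in_setU (imset_f _ wW).
have nall (z : T') : z \notin W' -> exists l, crd z l < nz l.
  move=> zW; apply/existsP; apply: contraT; rewrite negb_exists => /forallP H.
  suff e : z = ucorner n1 n2 n3 by rewrite e uW in zW.
  apply: crd_ext => l; rewrite crd_ucorner; apply/eqP; rewrite eqn_leq crd_le /=.
  by rewrite leqNgt H.
have := dir2 B2 B3 (cx := crd x) (cy := crd y) (@crd_le _ _ _ x) (@crd_le _ _ _ y).
case => //.
- apply/existsP; apply: contraT; rewrite negb_exists => /forallP H.
  suff : x = y by move/nxy.
  by apply: crd_ext => l; apply/eqP; rewrite -[_ == _]negbK H.
- exact: nall.
- exact: nall.
- have H : [exists l, crd x l == crd (ucorner n1 n2 n3) l] =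
           [exists l, crd y l == crd (ucorner n1 n2 n3) l].
    by apply: negb_inj; rewrite -!Kadj_ex; move: (HK _ uW); rewrite negbK => /eqP.
  transitivity [exists l, crd x l == crd (ucorner n1 n2 n3) l].
    by apply: eq_existsb => l; rewrite crd_ucorner.
  by rewrite H; apply: eq_existsb => l; rewrite crd_ucorner.
- move=> w wW.
  have H : [exists l, crd x l == crd (emb w) l] = [exists l, crd y l == crd (emb w) l].
    by apply: negb_inj; rewrite -!Kadj_ex; move: (HK _ (eW w wW)); rewrite negbK => /eqP.
  transitivity [exists l, crd x l == crd (emb w) l].
    by apply: eq_existsb => l; rewrite crd_emb eq_sym.
  by rewrite H; apply: eq_existsb => l; rewrite crd_emb eq_sym.
Qed.

End Main.


Theorem mainTheorem4 (n1 n2 n3 : nat) (W : {set vtx n1 n2 n3}) :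
  3 <= n1 -> 3 <= n2 -> n1 <= n3 -> n2 <= n3 ->
  basic_landmark W ->
  (resolving (@Kadj n1.+1 n2.+1 n3.+1)
     ([set emb w | w in W] :|: [set ucorner n1 n2 n3])
   <-> (~ bad4cycle W /\ ~ plainhex W /\ ~ rainbow_tri W)).
Proof.
move=> h1 h2 h13 h23 [_ [B2 B3]].
have g1 : 2 <= n1 by apply: ltnW.
have g2 : 2 <= n2 by apply: ltnW.
have g3 : 2 <= n3 by apply: leq_trans h13; apply: ltnW.
split.
  move=> R; split; [|split].
  - by move/(bad4_nres g1 g2 g3 B3).
  - by move/(hex_nres g1 g2 g3).
  - by move/(rainbow_nres g1 g2 g3).
by case=> nb [nh nr]; apply: (res_of g1 g2 g3 B2 B3).
Qed.
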